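(* Let $k$ be a field, $\mathbf C$ a finite category, $\mathcal{A}$ a presheaf of $k$-algebras on $\mathbf C$ and $\mathcal{M}$ a presheaf of $\mathcal{A}$-bimodules. Then for every $q\in\mathbb N$ the cochain complex $(C^{*,q}(\mathcal{A},\mathcal{M}),d_{\mathrm{simp}})$ (Hochschild degree $q$ fixed, simplicial degree varying) is isomorphic to the Baues–Wirsching cochain complex $(C^*_{BW}(\mathbf C,\mathcal{C}^q_{\mathrm{HH}}(\mathcal{A},\mathcal{M})),\delta_{BW})$.
   Context: Presheaf of $k$-algebras: functor $\mathcal{A}\colon\mathbf C^{\mathrm{op}}\to\mathbf{Alg}_k$ (associative unital finite-dimensional). Presheaf of $\mathcal{A}$-bimodules: functor $\mathcal{M}$ on $\mathbf C^{\mathrm{op}}$ with each $\mathcal{M}(c)$ an $\mathcal{A}(c)$-bimodule and each $\mathcal{M}(d)\to\mathcal{M}(c)$ (for $c\to d$) an $\mathcal{A}(d)$-bimodule map. $C^q_{\mathrm{HH}}(B,N)=\mathrm{Hom}_k(B^{\otimes q},N)$. Gerstenhaber–Schack cochains: for strings $\sigma=(c_0\to\cdots\to c_p)$ of composable morphisms, $C^{p,q}(\mathcal{A},\mathcal{M})=\prod_\sigma C^q_{\mathrm{HH}}(\mathcal{A}(c_p),\mathcal{M}(c_0))$ and $(d_{\mathrm{simp}}\Gamma)^\sigma=T\circ\Gamma^{\partial_0\sigma}+\sum_{r=1}^{p-1}(-1)^r\Gamma^{\partial_r\sigma}+(-1)^p\Gamma^{\partial_p\sigma}\circ\phi^{\otimes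 q}$, where $\partial_r\sigma$ deletes $c_r$, $T\colon\mathcal{M}(c_1)\to\mathcal{M}(c_0)$ is induced by $c_0\to c_1$ and $\phi\colon\mathcal{A}(c_p)\to\mathcal{A}(c_{p-1})$ by $c_{p-1}\to c_p$. Twisted arrow category $\mathrm{Tw}\,\mathbf C$: objects morphisms $f\colon c\to d$; morphisms $f\to g$ ($g\colon c'\to d'$) are pairs $(\alpha\colon d\to d',\beta\colon c'\to c)$ with $g=\alpha f\beta$. A natural system is a functor $F\colon\mathrm{Tw}\,\mathbf C\to\mathbf{Ab}$; write $\alpha_*=F(\alpha,1)$, $\beta^*=F(1,\beta)$. Baues–Wirsching complex: $C^n_{BW}(\mathbf C,F)=\prod F(f_1\circ\cdots\circ f_n)$ over strings $c_n\xrightarrow{f_n}c_{n-1}\to\cdots\xrightarrow{f_1}c_0$, with $(\delta_{BW}\Gamma)(f_1,\dots,f_n)={f_1}_*\Gamma(f_2,\dots,f_n)+\sum_{i=1}^{n-1}(-1)^i\Gamma(f_1,\dots,f_if_{i+1},\dots,f_n)+(-1)^n f_n^*\Gamma(f_1,\dots,f_{n-1})$. The natural system $\mathcal{C}^q_{\mathrm{HH}}(\mathcal{A},\mathcal{M})$ sends $f\colon c\to d$ to $C^q_{\mathrm{HH}}(\mathcal{A}(d),\mathcal{M}(c))$ and $(\alpha,\beta)$ to $\Gamma\mapsto\mathcal{M}(\beta)\circ\Gamma\circ\mathcal{A}(\alpha)^{\otimes q}$. *)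

(* Defs.v *)
From HB Require Import structures.
From mathcomp Require Import all_boot all_algebra.

Set Implicit Arguments.
Unset Strict Implicit.
Unset Printing Implicit Defensive.

Import GRing.Theory.
Local Open Scope ring_scope.

(* Finite categories.  [comp f g] is "g after f" (diagrammatic order). *)
Record FinCat := FinCatMk {
  Obj : finType;
  Hom : Obj -> Obj -> finType;
  idm : forall a, Hom a a;
  comp : forall a b c, Hom a b -> Hom b c -> Hom a c;
  comp_id_l : forall a b (f : Hom a b), comp (idm a) f = f;
  comp_id_r : forall a b (f : Hom a b), comp f (idm b) = f;
  comp_assoc : forall a b c d (f : Hom a b) (g : Hom b c) (h : Hom c d),
      comp (comp f g) h = comp f (comp g h)
}.
Arguments idm {_} a.
Arguments comp {_ a b c} f g.

(* Associative unital finite-dimensional k-algebras (the zero algebra  *)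
(* is allowed, so we do not use MathComp's nz-ring based algType).     *)
Record kAlgebra (k : fieldType) := KAlgebra {
  acarrier :> lmodType k;
  amul : acarrier -> acarrier -> acarrier;
  aone : acarrier;
  amulA : forall x y z, amul x (amul y z) = amul (amul x y) z;
  amul1x : forall x, amul aone x = x;
  amulx1 : forall x, amul x aone = x;
  amul_linl : forall (c : k) x y z, amul (c *: x + y) z = c *: amul x z + amul y z;
  amul_linr : forall (c : k) x y z, amul z (c *: x + y) = c *: amul z x + amul z y;
  afindim : exists n (e : 'I_n -> acarrier),
      forall x, exists a : 'I_n -> k, x = \sum_(i < n) a i *: e i
}.
Arguments amul {k} _ x y.
Arguments aone {k} _.

Record AlgPresheaf (k : fieldType) (C : FinCat) := AlgPresheafMk {
  alg : Obj C -> kAlgebra k;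
  ares : forall a b, Hom a b -> alg b -> alg a;
  ares_lin : forall a b (f : Hom a b) (c : k) x y,
      ares f (c *: x + y) = c *: ares f x + ares f y;
  ares_mul : forall a b (f : Hom a b) x y,
      ares f (amul _ x y) = amul _ (ares f x) (ares f y);
  ares_one : forall a b (f : Hom a b), ares f (aone _) = aone _;
  ares_id : forall a x, ares (idm a) x = x;
  ares_comp : forall a b c (f : Hom a b) (g : Hom b c) x,
      ares (comp f g) x = ares f (ares g x)
}.
Arguments alg {k C} _ a.
Arguments ares {k C} _ {a b} f x.

Record BimodPresheaf (k : fieldType) (C : FinCat) (A : AlgPresheaf k C) :=
 BimodPresheafMk {
  bmod : Obj C -> lmodType k;
  lact : forall a, alg A a -> bmod a -> bmod a;
  ract : forall a, bmod a -> alg A a -> bmod a;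
  lact_linl : forall a (c : k) (x y : alg A a) m,
      lact (c *: x + y) m = c *: lact x m + lact y m;
  lact_linr : forall a (c : k) (x : alg A a) m n,
      lact x (c *: m + n) = c *: lact x m + lact x n;
  ract_linl : forall a (c : k) (x : alg A a) m n,
      ract (c *: m + n) x = c *: ract m x + ract n x;
  ract_linr : forall a (c : k) (x y : alg A a) m,
      ract m (c *: x + y) = c *: ract m x + ract m y;
  lact_mul : forall a (x y : alg A a) m, lact (amul _ x y) m = lact x (lact y m);
  lact_one : forall a m, lact (aone (alg A a)) m = m;
  ract_mul : forall a (x y : alg A a) m, ract m (amul _ x y) = ract (ract m x) y;
  ract_one : forall a m, ract m (aone (alg A a)) = m;
  lract : forall a (x y : alg A a) m, ract (lact x m) y = lact x (ract m y);
  mres : forall a b, Hom a b -> bmod b -> bmod a;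
  mres_lin : forall a b (f : Hom a b) (c : k) m n,
      mres f (c *: m + n) = c *: mres f m + mres f n;
  mres_lact : forall a b (f : Hom a b) x m,
      mres f (lact x m) = lact (ares A f x) (mres f m);
  mres_ract : forall a b (f : Hom a b) m x,
      mres f (ract m x) = ract (mres f m) (ares A f x);
  mres_id : forall a m, mres (idm a) m = m;
  mres_comp : forall a b c (f : Hom a b) (g : Hom b c) m,
      mres (comp f g) m = mres f (mres g m)
}.
Arguments bmod {k C A} _ a.
Arguments mres {k C A} _ {a b} f m.

(* Hochschild cochains C^q_HH(B, N) = Hom_k(B^{(x)q}, N), represented  *)
(* (universal property of the tensor power) as k-multilinear maps      *)
(* B^q -> N.  [HHraw] is the ambient function type, [multilinear] the  *)
(* condition cutting out the cochains.                                 *)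
Definition HHraw (k : fieldType) (q : nat) (B N : lmodType k) :=
  ('I_q -> B) -> N.

Definition multilinear (k : fieldType) (q : nat) (B N : lmodType k)
    (g : ('I_q -> B) -> N) : Prop :=
  forall (i : 'I_q) (x : 'I_q -> B) (c : k) (u v : B),
    g (fun j => if j == i then c *: u + v else x j)
    = c *: g (fun j => if j == i then u else x j)
      + g (fun j => if j == i then v else x j).

(* Gerstenhaber-Schack strings  sigma = (c_0 -> c_1 -> ... -> c_p),     *)
(* [gsstr p c_0 c_p]; built by prepending the first arrow c_0 -> c_1.  *)
Section Strings.
Variable C : FinCat.

Inductive gsstr : nat -> Obj C -> Obj C -> Type :=
| gs0 (c : Obj C) : gsstr 0 c c
| gsS (p : nat) (a c b : Obj C) (f : Hom a c) (rest : gsstr p c b) :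
    gsstr p.+1 a b.

Definition gs_headT (n : nat) (a b : Obj C) : Type :=
  match n with 0 => unit | m.+1 => {c : Obj C & (Hom a c * gsstr m c b)%type} end.

Definition gs_uncons n a b (s : gsstr n a b) : gs_headT n a b :=
  match s in gsstr n a b return gs_headT n a b with
  | gs0 _ => tt
  | gsS _ _ c _ f r => existT _ c (f, r)
  end.

(* transport of a final arrow along a length-0 string *)
Definition gs_cast0 a c b (r : gsstr 0 c b) : Hom a c -> Hom a b :=
  match r in gsstr n c' b'
        return (match n with 0 => Hom a c' -> Hom a b' | _ => unit end) with
  | gs0 _ => fun f => f
  | gsS _ _ _ _ _ _ => tt
  end.

(* last face: (c_0 -> ... -> c_n -> c_{n+1}) |-> (c_0 -> ... -> c_n),
   together with the deleted last arrow c_n -> c_{n+1} *)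
Fixpoint gs_dlast (n : nat) :
    forall a b, gsstr n.+1 a b -> {c : Obj C & (gsstr n a c * Hom c b)%type} :=
  match n with
  | 0 => fun a b s =>
      let: existT c (f, r) := (gs_uncons s : gs_headT 1 a b) in
      existT _ a (gs0 a, gs_cast0 r f)
  | n'.+1 => fun a b s =>
      let: existT c (f, r) := (gs_uncons s : gs_headT n'.+2 a b) in
      let: existT d (t, h) := gs_dlast r in
      existT _ d (gsS f t, h)
  end.

(* inner face d_i, i >= 1: deletes c_i, composing c_{i-1} -> c_i -> c_{i+1} *)
Fixpoint gs_face (i n : nat) : forall a b, gsstr n.+2 a b -> gsstr n.+1 a b :=
  match n with
  | 0 => fun a b s =>
      let: existT c (f, t) := (gs_uncons s : gs_headT 2 a b) in
      let: existT d (g, r) := (gs_uncons t : gs_headT 1 c b) in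
      gsS (comp f g) r
  | n'.+1 => fun a b s =>
      let: existT c (f, t) := (gs_uncons s : gs_headT n'.+3 a b) in
      if (i <= 1)%N then
        let: existT d (g, r) := (gs_uncons t : gs_headT n'.+2 c b) in
        gsS (comp f g) r
      else gsS f (gs_face i.-1 t)
  end.

(* Baues-Wirsching strings  c_n -f_n-> c_{n-1} -> ... -f_1-> c_0,       *)
(* [bwstr n c_n c_0]; built by prepending f_1 : c_1 -> c_0 to the      *)
(* string (f_2, ..., f_n) : c_n -> ... -> c_1.                         *)
Inductive bwstr : nat -> Obj C -> Obj C -> Type :=
| bw0 (c : Obj C) : bwstr 0 c c
| bwS (n : nat) (a c b : Obj C) (f1 : Hom c b) (rest : bwstr n a c) :
    bwstr n.+1 a b.

Fixpoint bw_comp n a b (s : bwstr n a b) : Hom a b :=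
  match s in bwstr n a b return Hom a b with
  | bw0 c => idm c
  | bwS _ _ _ _ f1 r => comp (bw_comp r) f1
  end.

Definition bw_headT (n : nat) (a b : Obj C) : Type :=
  match n with 0 => unit | m.+1 => {c : Obj C & (Hom c b * bwstr m a c)%type} end.

Definition bw_uncons n a b (s : bwstr n a b) : bw_headT n a b :=
  match s in bwstr n a b return bw_headT n a b with
  | bw0 _ => tt
  | bwS _ _ c _ f r => existT _ c (f, r)
  end.

Definition bw_cast0 a c b (r : bwstr 0 a c) : Hom c b -> Hom a b :=
  match r in bwstr n a' c'
        return (match n with 0 => Hom c' b -> Hom a' b | _ => unit end) with
  | bw0 _ => fun f => f
  | bwS _ _ _ _ _ _ => tt
  end.

(* (f_1, ..., f_n, f_{n+1}) |-> ((f_1, ..., f_n), f_{n+1}) *)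
Fixpoint bw_dlast (n : nat) :
    forall a b, bwstr n.+1 a b -> {c : Obj C & (bwstr n c b * Hom a c)%type} :=
  match n with
  | 0 => fun a b s =>
      let: existT c (f, r) := (bw_uncons s : bw_headT 1 a b) in
      existT _ b (bw0 b, bw_cast0 r f)
  | n'.+1 => fun a b s =>
      let: existT c (f, r) := (bw_uncons s : bw_headT n'.+2 a b) in
      let: existT d (t, h) := bw_dlast r in
      existT _ d (bwS f t, h)
  end.

(* (f_1, ..., f_i f_{i+1}, ..., f_{n+2}) for i >= 1 *)
Fixpoint bw_face (i n : nat) : forall a b, bwstr n.+2 a b -> bwstr n.+1 a b :=
  match n with
  | 0 => fun a b s =>
      let: existT c (f, t) := (bw_uncons s : bw_headT 2 a b) in
      let: existT d (g, r) := (bw_uncons t : bw_headT 1 a c) in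
      bwS (comp g f) r
  | n'.+1 => fun a b s =>
      let: existT c (f, t) := (bw_uncons s : bw_headT n'.+3 a b) in
      if (i <= 1)%N then
        let: existT d (g, r) := (bw_uncons t : bw_headT n'.+2 a c) in
        bwS (comp g f) r
      else bwS f (bw_face i.-1 t)
  end.

End Strings.

Arguments gs0 {C} c.
Arguments gsS {C p a c b} f rest.
Arguments bw0 {C} c.
Arguments bwS {C n a c b} f1 rest.
Arguments gs_dlast {C n a b} s.
Arguments gs_face {C} i {n a b} s.
Arguments gs_uncons {C n a b} s.
Arguments bw_dlast {C n a b} s.
Arguments bw_face {C} i {n a b} s.
Arguments bw_uncons {C n a b} s.
Arguments bw_comp {C n a b} s.

Section Complexes.
Variables (k : fieldType) (C : FinCat) (A : AlgPresheaf k C)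
          (M : BimodPresheaf A) (q : nat).

Definition GSraw (p : nat) : Type :=
  forall a b (s : @gsstr C p a b), HHraw q (alg A b) (bmod M a).

Definition is_GS_cochain p (G : GSraw p) : Prop :=
  forall a b (s : @gsstr C p a b), multilinear (G a b s).

Definition GS_add p (G H : GSraw p) : GSraw p :=
  fun a b s x => G a b s x + H a b s x.
Definition GS_scale p (c : k) (G : GSraw p) : GSraw p :=
  fun a b s x => c *: G a b s x.

Definition GS_inner (p : nat) :
    GSraw p -> forall a b, @gsstr C p.+1 a b -> HHraw q (alg A b) (bmod M a) :=
  match p as p0 return
    GSraw p0 -> forall a b, @gsstr C p0.+1 a b -> HHraw q (alg A b) (bmod M a)
  with
  | 0 => fun _ _ _ _ _ => 0
  | p'.+1 => fun G a b s x =>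
      \sum_(1 <= r < p'.+2) (-1) ^+ r *: G a b (gs_face r s) x
  end.

Definition d_simp (p : nat) (G : GSraw p) : GSraw p.+1 :=
  fun a b s x =>
    (let: existT c (f, r) := (gs_uncons s : @gs_headT C p.+1 a b) in
     mres M f (G c b r x))
    + GS_inner G s x
    + (-1) ^+ p.+1 *:
      (let: existT c (t, h) := gs_dlast s in
       G a c t (fun j => ares A h (x j))).

Definition HHnat (c d : Obj C) (f : Hom c d) : Type :=
  HHraw q (alg A d) (bmod M c).
Definition nat_push c d d' (f : Hom c d) (alpha : Hom d d')
    (G : HHnat f) : HHnat (comp f alpha) :=
  fun x => G (fun j => ares A alpha (x j)).
Definition nat_pull c' c d (beta : Hom c' c) (f : Hom c d)
    (G : HHnat f) : HHnat (comp beta f) :=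
  fun x => mres M beta (G x).

Definition BWraw (n : nat) : Type :=
  forall a b (s : @bwstr C n a b), HHnat (bw_comp s).

Definition is_BW_cochain n (G : BWraw n) : Prop :=
  forall a b (s : @bwstr C n a b), multilinear (G a b s).

Definition BW_add n (G H : BWraw n) : BWraw n :=
  fun a b s x => G a b s x + H a b s x.
Definition BW_scale n (c : k) (G : BWraw n) : BWraw n :=
  fun a b s x => c *: G a b s x.

Definition BW_inner (n : nat) :
    BWraw n -> forall a b (s : @bwstr C n.+1 a b), HHnat (bw_comp s) :=
  match n as n0 return
    BWraw n0 -> forall a b (s : @bwstr C n0.+1 a b), HHnat (bw_comp s)
  with
  | 0 => fun _ _ _ _ _ => 0
  | n'.+1 => fun G a b s x =>
      \sum_(1 <= i < n'.+2) (-1) ^+ i *: G a b (bw_face i s) x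
  end.

Definition delta_BW (n : nat) (G : BWraw n) : BWraw n.+1 :=
  fun a b s x =>
    (let: existT c (f1, r) := (bw_uncons s : @bw_headT C n.+1 a b) in
     nat_push f1 (G a c r) x)
    + BW_inner G s x
    + (-1) ^+ n.+1 *:
      (let: existT c (t, fl) := bw_dlast s in
       nat_pull fl (G c b t) x).

End Complexes.

(* Isomorphism of cochain complexes of k-vector spaces, each given as  *)
(* an ambient family X p with a predicate cutting out the cochains.    *)
Definition cochain_complexes_isomorphic (k : fieldType)
    (X Y : nat -> Type)
    (isX : forall p, X p -> Prop) (isY : forall p, Y p -> Prop)
    (addX : forall p, X p -> X p -> X p) (sclX : forall p, k -> X p -> X p)
    (addY : forall p, Y p -> Y p -> Y p) (sclY : forall p, k -> Y p -> Y p)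
    (dX : forall p, X p -> X p.+1) (dY : forall p, Y p -> Y p.+1) : Prop :=
  exists Phi : forall p, X p -> Y p,
    forall p,
      (forall G, isX p G -> isY p (Phi p G)) /\
      (forall G H, isX p G -> isX p H -> Phi p G = Phi p H -> G = H) /\
      (forall K, isY p K -> exists G, isX p G /\ Phi p G = K) /\
      (forall (c : k) G H, isX p G -> isX p H ->
         Phi p (addX p (sclX p c G) H) = addY p (sclY p c (Phi p G)) (Phi p H)) /\
      (forall G, isX p G -> Phi p.+1 (dX p G) = dY p (Phi p G)).

(* Main.v *)
From HB Require Import structures.
From mathcomp Require Import all_boot all_algebra.
From mathcomp Require Import zify.
Require Import Defs.
Set Implicit Arguments. Unset Strict Implicit. Unset Printing Implicit Defensive.
Import GRing.Theory.
Local Open Scope ring_scope.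

Fixpoint gs_snoc {C : FinCat} n a c b (t : @gsstr C n a c) : Hom c b -> @gsstr C n.+1 a b :=
  match t in @gsstr _ n a c return Hom c b -> @gsstr C n.+1 a b with
  | gs0 c => fun h => gsS h (gs0 b)
  | gsS _ _ _ _ f r => fun h => gsS f (gs_snoc r h)
  end.

Fixpoint bw_snoc {C : FinCat} n a c b (fl : Hom a c) (t : @bwstr C n c b) : @bwstr C n.+1 a b :=
  match t in @bwstr _ n c b return Hom a c -> @bwstr C n.+1 a b with
  | bw0 c => fun fl => bwS fl (bw0 a)
  | bwS _ _ _ _ f1 r => fun fl => bwS f1 (bw_snoc fl r)
  end fl.

Fixpoint b2g {C : FinCat} n a b (s : @bwstr C n a b) : @gsstr C n a b :=
  match s with
  | bw0 c => gs0 c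
  | bwS _ _ _ _ f1 r => gs_snoc (b2g r) f1
  end.

Fixpoint g2b {C : FinCat} n a b (s : @gsstr C n a b) : @bwstr C n a b :=
  match s with
  | gs0 c => bw0 c
  | gsS _ _ _ _ f r => bw_snoc f (g2b r)
  end.

Lemma gs_inv {C : FinCat} n a b (s : @gsstr C n a b) :
  match n return @gsstr C n a b -> Prop with 0 => fun _ => True
  | m.+1 => fun s => exists c f r, s = @gsS C m a c b f r end s.
Proof. by case: s => // p a' c b' f r; exists c, f, r. Qed.

Lemma bw_inv {C : FinCat} n a b (s : @bwstr C n a b) :
  match n return @bwstr C n a b -> Prop with 0 => fun _ => True
  | m.+1 => fun s => exists c f r, s = @bwS C m a c b f r end s.
Proof. by case: s => // p a' c b' f r; exists c, f, r. Qed.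

Lemma gs_caseS {C : FinCat} n a b (P : @gsstr C n.+1 a b -> Prop) :
  (forall c (f : Hom a c) (r : @gsstr C n c b), P (gsS f r)) -> forall s, P s.
Proof. by move=> H s; case: (gs_inv s) => c [f [r ->]]. Qed.

Lemma bw_caseS {C : FinCat} n a b (P : @bwstr C n.+1 a b -> Prop) :
  (forall c (f : Hom c b) (r : @bwstr C n a c), P (bwS f r)) -> forall s, P s.
Proof. by move=> H s; case: (bw_inv s) => c [f [r ->]]. Qed.

Lemma b2g_snoc {C : FinCat} n a c b (fl : Hom a c) (t : @bwstr C n c b) :
  b2g (bw_snoc fl t) = gsS fl (b2g t).
Proof. by elim: t fl => //= m c' d b' f1 r IH fl; rewrite IH. Qed.

Lemma g2b_snoc {C : FinCat} n a c b (t : @gsstr C n a c) (h : Hom c b) :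
  g2b (gs_snoc t h) = bwS h (g2b t).
Proof. by elim: t h => //= m a' c' b' f r IH h; rewrite IH. Qed.

Lemma g2bK {C : FinCat} n a b (s : @bwstr C n a b) : g2b (b2g s) = s.
Proof. by elim: s => //= m a' c b' f r IH; rewrite g2b_snoc IH. Qed.

Lemma b2gK {C : FinCat} n a b (s : @gsstr C n a b) : b2g (g2b s) = s.
Proof. by elim: s => //= m a' c b' f r IH; rewrite b2g_snoc IH. Qed.

Lemma gs_dlast_snoc {C : FinCat} n a c b (t : @gsstr C n a c) (h : Hom c b) :
  gs_dlast (gs_snoc t h) = existT _ c (t, h).
Proof. by elim: t h => //= m a' c' b' f r IH h; rewrite IH. Qed.

Lemma bw_dlast_snoc {C : FinCat} n a c b (fl : Hom a c) (t : @bwstr C n c b) :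
  bw_dlast (bw_snoc fl t) = existT _ c (t, fl).
Proof. by elim: t fl => //= m c' d b' f1 r IH fl; rewrite IH. Qed.

Lemma gs_faceS {C : FinCat} i n a c b (e : Hom a c) (s : @gsstr C n.+2 c b) :
  gs_face i.+2 (gsS e s) = gsS e (gs_face i.+1 s).
Proof. by []. Qed.

Lemma gs_face1 {C : FinCat} n a c d b (e : Hom a c) (e2 : Hom c d) (s : @gsstr C n d b) :
  gs_face 1 (gsS e (gsS e2 s)) = gsS (comp e e2) s.
Proof. by case: n s. Qed.

Lemma gs_face_last {C : FinCat} m a c d b (t : @gsstr C m a c) (g : Hom c d) (f : Hom d b) :
  gs_face m.+1 (gs_snoc (gs_snoc t g) f) = gs_snoc t (comp g f).
Proof.
elim: t g f => [a'|p a' c' b' e r IH] g f; first by [].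
by rewrite [gs_snoc (gs_snoc _ g) f]/= gs_faceS IH.
Qed.

Lemma gs_face_snoc {C : FinCat} m a c b (t : @gsstr C m.+2 a c) (h : Hom c b) j :
  (1 <= j <= m.+1)%N -> gs_face j (gs_snoc t h) = gs_snoc (gs_face j t) h.
Proof.
elim: m a t j => [|m IH] a t j /andP [j1 jm];
  case: (gs_inv t) => c1 [e [{}t ->]]; case: (gs_inv t) => c2 [e2 [{}t ->]].
  have -> : j = 1%N by apply/eqP; rewrite eqn_leq jm j1.
  by rewrite [gs_snoc _ h]/= !gs_face1.
case: j j1 jm => [//|[|j]] _ jm.
  by rewrite [gs_snoc _ h]/= !gs_face1.
rewrite [gs_snoc (gsS e _) h]/= !gs_faceS.
by rewrite -[gsS e2 (gs_snoc t h)]/(gs_snoc (gsS e2 t) h) IH.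
Qed.

Lemma bw_face1 {C : FinCat} n a c d b (f : Hom c b) (g : Hom d c) (r : @bwstr C n a d) :
  bw_face 1 (bwS f (bwS g r)) = bwS (comp g f) r.
Proof. by case: n r. Qed.

Lemma bw_faceS {C : FinCat} i n a c b (f : Hom c b) (s : @bwstr C n.+2 a c) :
  bw_face i.+2 (bwS f s) = bwS f (bw_face i.+1 s).
Proof. by []. Qed.

Lemma b2g_face {C : FinCat} n a b (s : @bwstr C n.+2 a b) i :
  (1 <= i <= n.+1)%N -> b2g (bw_face i s) = gs_face (n.+2 - i) (b2g s).
Proof.
elim: n b s i => [|n IH] b s i /andP [i1 im];
  case: (bw_inv s) => c1 [f1 [{}s ->]].
  have -> : i = 1%N by apply/eqP; rewrite eqn_leq im i1.
  case: (bw_inv s) => c2 [g [{}s ->]].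
  by rewrite bw_face1 [b2g (bwS f1 _)]/= gs_face_last.
case: i i1 im => [//|[|i]] _ im.
  case: (bw_inv s) => c2 [g [{}s ->]].
  by rewrite bw_face1 subSS subn0 [b2g (bwS f1 _)]/= gs_face_last.
rewrite bw_faceS [b2g (bwS f1 _)]/= IH // [b2g (bwS f1 s)]/= subSS.
rewrite gs_face_snoc //.
lia.
Qed.

From Stdlib Require Import FunctionalExtensionality.

Fixpoint eps (k : fieldType) (p : nat) : k :=
  if p is p'.+1 then (-1) ^+ p'.+1 * eps k p' else 1.

Lemma sign_sq (k : fieldType) n : (-1) ^+ n * (-1) ^+ n = 1 :> k.
Proof. by rewrite -exprMn mulrNN mulr1 expr1n. Qed.

Lemma epsK (k : fieldType) p : eps k p * eps k p = 1.
Proof.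
elim: p => [|p IH] /=; first by rewrite mulr1.
by rewrite mulrACA sign_sq IH mulr1.
Qed.

Lemma sign_sub (k : fieldType) n i : (i <= n)%N ->
  (-1) ^+ (n - i) = (-1) ^+ n * (-1) ^+ i :> k.
Proof.
move=> H; rewrite -{2}(subnK H) exprD -mulrA sign_sq mulr1 //.
Qed.

Lemma mres_scale (k : fieldType) (C : FinCat) (A : AlgPresheaf k C)
  (M : BimodPresheaf A) a b (f : Hom a b) (c : k) m :
  mres M f (c *: m) = c *: mres M f m.
Proof.
have H0 : mres M f 0 = 0.
  have := @mres_lin _ _ _ M _ _ f 1 0 0; rewrite !scale1r addr0 => E.
  by have := congr1 (fun y => y - mres M f 0) E; rewrite subrr addrK.
by have := @mres_lin _ _ _ M _ _ f c m 0; rewrite addr0 H0 addr0.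
Qed.

Lemma gs_dlast_b2g {C : FinCat} n a b (s : @bwstr C n.+1 a b) :
  gs_dlast (b2g s) = let: existT c (f, r) := (bw_uncons s : @bw_headT C n.+1 a b) in
                     existT _ c (b2g r, f).
Proof. by case: (bw_inv s) => c [f [r ->]] /=; rewrite gs_dlast_snoc. Qed.

Lemma gs_uncons_b2g {C : FinCat} n a b (s : @bwstr C n.+1 a b) :
  gs_uncons (b2g s) = let: existT c (t, fl) := bw_dlast s in
                      (existT _ c (fl, b2g t) : @gs_headT C n.+1 a b).
Proof.
rewrite -{2}(g2bK s); move: (b2g s) => u.
case: (gs_inv u) => c [f [t ->]] /=.
by rewrite bw_dlast_snoc b2gK.
Qed.

Definition Phi (k : fieldType) (C : FinCat) (A : AlgPresheaf k C)
  (M : BimodPresheaf A) (q p : nat) (G : GSraw M q p) : BWraw M q p :=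
  fun a b s x => eps k p *: G a b (b2g s) x.

Definition Psi (k : fieldType) (C : FinCat) (A : AlgPresheaf k C)
  (M : BimodPresheaf A) (q p : nat) (K : BWraw M q p) : GSraw M q p :=
  fun a b t x => eps k p *: K a b (g2b t) x.

Lemma inner_eq (k : fieldType) (C : FinCat) (A : AlgPresheaf k C)
  (M : BimodPresheaf A) (q p : nat) (G : GSraw M q p) a b (s : @bwstr C p.+1 a b) x :
  BW_inner (Phi G) s x = eps k p.+1 *: GS_inner G (b2g s) x.
Proof.
case: p G s x => [|p] G s x /=; first by rewrite scaler0.
rewrite scaler_sumr big_nat_rev /=.
apply: eq_big_nat => i /andP [i1 i2].
rewrite add1n subSS /Phi b2g_face; last by lia.
rewrite subKn; last by lia.
rewrite !scalerA; congr (_ *: _).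
rewrite sign_sub; last by lia.
by rewrite mulrAC mulrA.
Qed.

Lemma scale_ml (k : fieldType) (q : nat) (B N : lmodType k) (e : k) (g : ('I_q -> B) -> N) :
  multilinear g -> multilinear (fun x => e *: g x).
Proof.
by move=> H i x c u v; rewrite H scalerDr !scalerA mulrC.
Qed.

Theorem proposition3p8 (k : fieldType) (C : FinCat) (A : AlgPresheaf k C)
    (M : BimodPresheaf A) (q : nat) :
  cochain_complexes_isomorphic
    (@is_GS_cochain k C A M q) (@is_BW_cochain k C A M q)
    (@GS_add k C A M q) (@GS_scale k C A M q)
    (@BW_add k C A M q) (@BW_scale k C A M q)
    (@d_simp k C A M q) (@delta_BW k C A M q).
Proof.
exists (@Phi k C A M q) => p; split; [|split; [|split; [|split]]].
- by move=> G HG a b s; apply: scale_ml.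
- move=> G H _ _ E.
  apply: functional_extensionality_dep => a.
  apply: functional_extensionality_dep => b.
  apply: functional_extensionality_dep => t.
  apply: functional_extensionality => x.
  have := equal_f_dep (equal_f_dep (equal_f_dep (equal_f_dep E a) b) (g2b t)) x.
  rewrite /Phi b2gK => E'.
  by rewrite -[G a b t x]scale1r -(epsK k p) -scalerA E' scalerA epsK scale1r.
- move=> K HK; exists (Psi K); split.
    by move=> a b t; apply: scale_ml.
  apply: functional_extensionality_dep => a.
  apply: functional_extensionality_dep => b.
  apply: functional_extensionality_dep => s.
  apply: functional_extensionality => x.
  by rewrite /Phi /Psi scalerA epsK scale1r g2bK.
- move=> c G H _ _.
  apply: functional_extensionality_dep => a.
  apply: functional_extensionality_dep => b.
  apply: functional_extensionality_dep => s.
  apply: functional_extensionality => x.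
  by rewrite /Phi /GS_add /GS_scale /BW_add /BW_scale scalerDr !scalerA mulrC.
- move=> G _.
  apply: functional_extensionality_dep => a.
  apply: functional_extensionality_dep => b.
  apply: functional_extensionality_dep => s.
  apply: functional_extensionality => x.
  rewrite /delta_BW inner_eq /Phi /d_simp gs_dlast_b2g gs_uncons_b2g.
  case: (bw_uncons s) => c [f1 r]; case: (bw_dlast s) => c' [t fl].
  rewrite /nat_push /nat_pull mres_scale /=.
  rewrite !scalerDr !scalerA.
  set X := mres M fl _; set Y := GS_inner _ _ _; set Z := G a c _ _.
  rewrite mulrAC sign_sq mul1r.
  by rewrite addrC [_ *: X + _]addrC addrA.
Qed.
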